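(* Let $K$ be a field and $(Q,f,g,c,W)$ as in the setting below, with completed Jacobian algebra $\Lambda$, and assume that either $Q$ satisfies $(\star)$, or $Q$ satisfies $(\diamond)$ and $\prod_{\alpha\in\Omega}c_\alpha\neq1$ for $\Omega$ a set of representatives of the $g$-orbits. Then for every arrow $\alpha\in Q_1$, $$\alpha\cdot f(\alpha)\cdot f^2(\alpha)\cdot\alpha=0\quad\text{and}\quad \alpha\cdot g(\alpha)\cdots g^{n_\alpha-1}(\alpha)\cdot\alpha=0\quad\text{in }\Lambda.$$
   Context: Setting: $Q$ is a finite quiver with vertex set $Q_0$ and arrow set $Q_1$, connected, without loops or $2$-cycles, every vertex being the source of exactly two arrows and the target of exactly two arrows, equipped with bijections $f,g:Q_1\to Q_1$ such that for each $\alpha$, $\{f(\alpha),g(\alpha)\}$ is the set of the two arrows starting at the target of $\alpha$, and $f^3=\mathrm{id}$. $n_\alpha$ is the size of the $g$-orbit of $\alpha$. $c:Q_1\to K^\times$ is constant on $g$-orbits. Paths compose left to right ($\alpha\cdot\beta$ is $\alpha$ followed by $\beta$). $W=\sum_\alpha \alpha\cdot f(\alpha)\cdot f^2(\alpha)-\sum_\beta c_\beta\,\beta\cdot g(\beta)\cdots g^{n_\beta-1}(\beta)$ (sums over representatives of $f$-orbits, resp. $g$-orbits). $\Lambda=\widehat{KQ}/\overline{(\partial_\alpha W:\alpha\in Q_1)}$ is the completed Jacobian algebra. $(\star)$: for every $\alpha$, $n_\alpha\ge4$ or $n_{f(\alpha)}\ge4$. $(\diamond)$: $n_\alpha=3$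 for all $\alpha$. *)

(* Defs.v *)
From HB Require Import structures.
From mathcomp Require Import all_boot all_order all_algebra.
Set Implicit Arguments. Unset Strict Implicit. Unset Printing Implicit Defensive.
Import GRing.Theory.
Local Open Scope ring_scope.

Section Quiver.
Variables (K : fieldType) (Q0 Q1 : finType) (s t : Q1 -> Q0).

(* A path is (start vertex, list of arrows, composed left to right);
   (v, [::]) is the trivial path e_v. *)
Definition valid_path (v : Q0) (p : seq Q1) : bool :=
  if p is a :: p' then (s a == v) && path (fun a b => t a == s b) a p' else true.

Definition path_tgt (v : Q0) (p : seq Q1) : Q0 := last v (map t p).

Definition quiver_adj : rel Q0 :=
  fun x y => [exists a, ((s a == x) && (t a == y)) || ((s a == y) && (t a == x))].
Definition quiver_connected : Prop := forall u v, connect quiver_adj u v.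

(* Elements of the completed path algebra \widehat{KQ}: arbitrary
   K-valued functions on paths (formal, possibly infinite, sums of paths).
   Values on non-valid (v,p) are irrelevant and are killed by ps_mul. *)
Definition pser := Q0 -> seq Q1 -> K.
Definition ps_zero : pser := fun _ _ => 0.
Definition ps_add (x y : pser) : pser := fun v p => x v p + y v p.
Definition ps_scale (k : K) (x : pser) : pser := fun v p => k * x v p.
Definition ps_mul (x y : pser) : pser := fun v p =>
  if valid_path v p then
    \sum_(k < (size p).+1) x v (take k p) * y (path_tgt v (take k p)) (drop k p)
  else 0.
Definition ps_path (v0 : Q0) (q : seq Q1) : pser :=
  fun v p => if (v == v0) && (p == q) then 1 else 0.

(* A finite potential: a formal K-linear combination of cycles
   (each cycle a nonempty list of arrows). *)
Definition potential := seq (K * seq Q1).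

Definition cycderiv_seq (al : Q1) (cyc : seq Q1) : pser := fun v p =>
  \sum_(i < size cyc | nth al cyc i == al)
     ps_path (t al) (drop i.+1 cyc ++ take i cyc) v p.

Definition cycderiv (al : Q1) (W : potential) : pser := fun v p =>
  \sum_(kc <- W) kc.1 * cycderiv_seq al kc.2 v p.

Definition in_gen_ideal (dW : Q1 -> pser) (y : pser) : Prop :=
  exists l : seq (Q1 * pser * pser),
    forall v p, y v p = \sum_(x <- l) ps_mul (ps_mul x.1.2 (dW x.1.1)) x.2 v p.

(* x lies in the closure (arrow-ideal-adic topology) of that ideal, i.e.
   x = 0 in \widehat{KQ} / closure(dW b : b in Q1).  The basic
   neighbourhoods of 0 are m^n = elements vanishing on paths of length < n. *)
Definition zero_in_jacobian (dW : Q1 -> pser) (x : pser) : Prop :=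
  forall n : nat, exists y, in_gen_ideal dW y /\
    forall v p, valid_path v p -> (size p < n)%N -> x v p = y v p.

End Quiver.

(* The potential W = sum_{f-orbit reps a} a f(a) f^2(a)
                     - sum_{g-orbit reps b} c_b b g(b) ... g^{n_b - 1}(b),
   where n_b = fingraph.order g b is the size of the g-orbit of b,
   and representatives are the canonical roots (froots). *)
Definition W_fg (K : fieldType) (Q1 : finType) (f g : Q1 -> Q1) (c : Q1 -> K)
  : potential K Q1 :=
  [seq (1, traject f a 3) | a <- enum (froots f)] ++
  [seq (- c b, traject g b (fingraph.order g b)) | b <- enum (froots g)].

(* Main.v *)
Require Import Defs.
From HB Require Import structures.
From mathcomp Require Import all_boot all_order all_algebra.
From mathcomp Require Import zify.
Import GRing.Theory.
Local Open Scope ring_scope.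

Set Implicit Arguments. Unset Strict Implicit. Unset Printing Implicit Defensive.

Section Alg.
Variables (K : fieldType) (Q0 Q1 : finType) (s t : Q1 -> Q0).
Local Notation valid := (valid_path s t).
Local Notation tgt := (path_tgt t).
Local Notation mul := (@ps_mul K Q0 Q1 s t).
Local Notation path := (ps_path K).

Lemma valid_cat u p q : valid u (p ++ q) = valid u p && valid (tgt u p) q.
Proof.
case: p => [|a p] //=.
rewrite /path_tgt /= cat_path -andbA; congr (_ && (_ && _)).
case: q => [|b q] /=; first by [] .
by rewrite last_map eq_sym.
Qed.

Lemma tgt_cat u p q : tgt u (p ++ q) = tgt (tgt u p) q.
Proof. by rewrite /path_tgt map_cat last_cat. Qed.

Lemma tgt_rcons u p a : tgt u (rcons p a) = t a.
Proof. by rewrite /path_tgt map_rcons last_rcons. Qed.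

Lemma sum_take (T : eqType) (r p : seq T) (F : nat -> K) :
  \sum_(k < (size r).+1) (if take k r == p then F k else 0) =
  if take (size p) r == p then F (size p) else 0.
Proof.
have key : forall i : 'I_(size r).+1, take i r == p -> nat_of_ord i = size p.
  move=> i /eqP <-; rewrite size_takel //; by rewrite -ltnS.
case: ifP => H.
  have Hlt : (size p < (size r).+1)%N.
    by move/eqP: H => H; rewrite -H size_take; case: ifP => // /ltnW.
  rewrite (bigD1 (Ordinal Hlt)) //= H big1 ?addr0 // => i Hi.
  case: ifP => // /key Hk; exfalso; move/eqP: Hi; apply; apply/val_inj => /=.
  exact: Hk.
rewrite big1 // => i _; case: ifP => // Hi.
by move: (Hi); move/key => Hk; rewrite -Hk Hi in H.
Qed.

Lemma valid_take u r k : valid u r -> valid u (take k r).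
Proof. by rewrite -{1}(cat_take_drop k r) valid_cat => /andP[]. Qed.

Lemma valid_drop u r k : valid u r -> valid (tgt u (take k r)) (drop k r).
Proof. by rewrite -{1}(cat_take_drop k r) valid_cat => /andP[]. Qed.

Lemma mul_ext x x' y y' :
  (forall u r, valid u r -> x u r = x' u r) ->
  (forall u r, valid u r -> y u r = y' u r) ->
  forall u r, mul x y u r = mul x' y' u r.
Proof.
move=> Hx Hy u r; rewrite /ps_mul; case: ifP => // V.
apply: eq_bigr => k _; rewrite Hx ?Hy //; [exact: valid_drop | exact: valid_take].
Qed.

Lemma mul_subl x1 x2 (k : K) y u r :
  mul (fun u r => x1 u r - k * x2 u r) y u r = mul x1 y u r - k * mul x2 y u r.
Proof.
rewrite /ps_mul; case: ifP => _; last by rewrite mulr0 subr0.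
rewrite mulr_sumr -sumrB; apply: eq_bigr => i _.
by rewrite mulrBl mulrA.
Qed.

Lemma mul_subr y x1 x2 (k : K) u r :
  mul y (fun u r => x1 u r - k * x2 u r) u r = mul y x1 u r - k * mul y x2 u r.
Proof.
rewrite /ps_mul; case: ifP => _; last by rewrite mulr0 subr0.
rewrite mulr_sumr -sumrB; apply: eq_bigr => i _.
by rewrite mulrBr mulrCA.
Qed.

Lemma mul_scalel x (k : K) y u r :
  mul (fun u r => k * x u r) y u r = k * mul x y u r.
Proof.
rewrite /ps_mul; case: ifP => _; last by rewrite mulr0.
rewrite mulr_sumr; apply: eq_bigr => i _; by rewrite mulrA.
Qed.

Lemma mul_path_path v p w q u r : valid u r ->
  mul (path v p) (path w q) u r = if tgt v p == w then path v (p ++ q) u r else 0.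
Proof.
move=> V; rewrite /ps_mul V /ps_path.
rewrite (eq_bigr (fun k : 'I_(size r).+1 => if take k r == p then
   (if (u == v) && (tgt u (take k r) == w) && (drop k r == q) then (1:K) else 0) else 0)); last first.
  move=> i _; case: (take i r == p); rewrite ?andbT ?andbF ?mul0r //.
  case: (u == v); rewrite ?mul1r ?mul0r //=.
rewrite (sum_take r p (fun k => if (u == v) && (tgt u (take k r) == w) && (drop k r == q) then (1:K) else 0)).
case E: (take (size p) r == p); last first.
  case: ifP => // _; case: ifP => //; case/andP => _ /eqP Er.
  by rewrite Er take_size_cat ?eqxx in E.
move/eqP: E => E.
have Er : r = p ++ drop (size p) r by rewrite -{1}(cat_take_drop (size p) r) E.
case Hu: (u == v) => /=; last by case: ifP.
move/eqP: Hu => ->; rewrite E.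
case: (tgt v p == w) => //=.
by rewrite {2}Er eqseq_cat // eqxx.
Qed.

Lemma mul_path_path' v p w q u r : valid u r -> tgt v p = w ->
  mul (path v p) (path w q) u r = path v (p ++ q) u r.
Proof. by move=> V H; rewrite mul_path_path // H eqxx. Qed.

Variable dW : Q1 -> pser K Q0 Q1.
Local Notation IG := (in_gen_ideal s t dW).

Lemma IG0 : IG (fun _ _ => 0).
Proof. by exists [::] => v p; rewrite big_nil. Qed.

Lemma IG_add y1 y2 : IG y1 -> IG y2 -> IG (fun u r => y1 u r + y2 u r).
Proof.
move=> [l1 H1] [l2 H2]; exists (l1 ++ l2) => u r.
by rewrite big_cat /= H1 H2.
Qed.

Lemma IG_scale (k : K) y : IG y -> IG (fun u r => k * y u r).
Proof.
move=> [l H]; exists [seq (x.1.1, ps_scale k x.1.2, x.2) | x <- l] => u r.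
rewrite big_map H mulr_sumr; apply: eq_bigr => x _ /=.
rewrite -mul_scalel; apply: mul_ext => // u' r' _.
by rewrite -(mul_scalel x.1.2 k _ u' r').
Qed.

Lemma IG_term b x1 x2 : IG (mul (mul x1 (dW b)) x2).
Proof. by exists [:: (b, x1, x2)] => u r; rewrite big_seq1. Qed.

Variable v0 : Q0.
Definition Rel (X : seq Q1) (k : K) (Y : seq Q1) : Prop :=
  exists z, IG z /\ forall u r, valid u r -> path v0 X u r = k * path v0 Y u r + z u r.

Lemma Rel_refl X : Rel X 1 X.
Proof. exists (fun _ _ => 0); split; first exact: IG0. by move=> u r _; rewrite mul1r addr0. Qed.

Lemma Rel_trans X Y Z k1 k2 : Rel X k1 Y -> Rel Y k2 Z -> Rel X (k1 * k2) Z.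
Proof.
move=> [z1 [I1 H1]] [z2 [I2 H2]].
exists (fun u r => k1 * z2 u r + z1 u r); split.
  by apply: IG_add => //; apply: IG_scale.
move=> u r V; rewrite H1 // H2 //; rewrite mulrDr mulrA addrA //.
Qed.

Section Move.
Variables (b : Q1) (L R : seq Q1) (cb : K) (w : Q0).
Hypothesis HdW : forall u r, dW b u r = path (t b) L u r - cb * path (t b) R u r.
Hypothesis HL : tgt (t b) L = w.
Hypothesis HR : tgt (t b) R = w.

Lemma term_eq v p q u r : tgt v p = t b -> valid u r ->
  mul (mul (path v p) (dW b)) (path w q) u r =
  path v (p ++ L ++ q) u r - cb * path v (p ++ R ++ q) u r.
Proof.
move=> Hp V.
have E1 : forall u' r', valid u' r' ->
   mul (path v p) (dW b) u' r' = path v (p ++ L) u' r' - cb * path v (p ++ R) u' r'.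
  move=> u' r' V'.
  rewrite (@mul_ext (path v p) (path v p) (dW b)
     (fun u r => path (t b) L u r - cb * path (t b) R u r)); [ | by [] | by move=> *; rewrite HdW].
  by rewrite (mul_subr (path v p) (path (t b) L) (path (t b) R) cb) !mul_path_path'.
rewrite (@mul_ext _ (fun u r => path v (p ++ L) u r - cb * path v (p ++ R) u r)
            (path w q) (path w q)) //.
rewrite mul_subl !mul_path_path' // ?catA // tgt_cat Hp //.
Qed.

Lemma Rel_move p q : tgt v0 p = t b -> Rel (p ++ L ++ q) cb (p ++ R ++ q).
Proof.
move=> Hp; exists (mul (mul (path v0 p) (dW b)) (path w q)); split; first exact: IG_term.
by move=> u r V; rewrite term_eq // addrC subrK.
Qed.

Lemma Rel_move_inv p q : cb != 0 -> tgt v0 p = t b -> Rel (p ++ R ++ q) cb^-1 (p ++ L ++ q).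
Proof.
move=> Hc Hp.
exists (fun u r => - cb^-1 * mul (mul (path v0 p) (dW b)) (path w q) u r); split.
  by apply: IG_scale; apply: IG_term.
move=> u r V; rewrite term_eq // mulNr mulrBr mulrA mulVf // mul1r opprB addrC subrK //.
Qed.
End Move.
End Alg.



Section Orb.
Variables (T : finType) (h : T -> T).
Hypothesis h_inj : injective h.

Lemma order_conn x y : fconnect h x y -> order h x = order h y.
Proof.
move=> H; rewrite /order; apply: eq_card => z.
by rewrite !inE; apply: same_connect => //; apply: fconnect_sym.
Qed.

Lemma order_h x : order h (h x) = order h x.
Proof. by symmetry; apply: order_conn; apply: fconnect1. Qed.

Lemma rot_orbit a b : fconnect h a b ->
  drop (findex h a b).+1 (orbit h a) ++ take (findex h a b) (orbit h a) =
  traject h (h b) (order h a).-1.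
Proof.
move=> Hab.
have Hi : (findex h a b < order h a)%N by apply: findex_max.
have Hb : iter (findex h a b) h a = b by apply: iter_findex.
have Ho : iter (order h a) h a = a by apply: iter_order.
rewrite /orbit; move: Hi Hb Ho; move: (findex h a b) (order h a) => i n Hi Hb Ho.
have E : traject h a n = traject h a i ++ b :: traject h (h b) (n - i.+1).
  rewrite -trajectS -Hb -trajectD; congr traject.
  by rewrite subnSK // subnKC // ltnW.
rewrite E take_size_cat ?size_traject // -cat_rcons drop_size_cat ?size_rcons ?size_traject //.
have -> : n.-1 = (n - i.+1 + i)%N by rewrite -{1}(subnKC Hi) addSn addnC.
rewrite trajectD.
have -> : iter (n - i.+1) h (h b) = a.
  by rewrite -iterSr -subSn // subSS -Hb -iterD (subnK (ltnW Hi)).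
by [].
Qed.
End Orb.

Section DW.
Variables (K : fieldType) (Q0 Q1 : finType) (s t : Q1 -> Q0).
Local Notation path := (@ps_path K Q0 Q1).

Lemma cs_orbit (h : Q1 -> Q1) (h_inj : injective h) a b u r :
  fconnect h a b ->
  cycderiv_seq K t b (orbit h a) u r = path (t b) (traject h (h b) (order h a).-1) u r.
Proof.
move=> Hab; rewrite /cycderiv_seq size_orbit.
have Hi : (findex h a b < order h a)%N by apply: findex_max.
rewrite (big_pred1 (Ordinal Hi)) /=; first by rewrite rot_orbit.
move=> i /=; rewrite (set_nth_default a) ?size_orbit // /orbit nth_traject //.
apply/eqP/eqP => [Ei | ->]; last by rewrite /= iter_findex.
by apply/val_inj => /=; rewrite -Ei findex_iter.
Qed.

Lemma cs_orbit0 (h : Q1 -> Q1) a b u r :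
  ~~ fconnect h a b -> cycderiv_seq K t b (orbit h a) u r = 0.
Proof.
move=> Hab; rewrite /cycderiv_seq big1 // => i Hi.
exfalso; move/negP: Hab; apply; rewrite fconnect_orbit -(eqP Hi) mem_nth //.
Qed.

Lemma sum_roots (h : Q1 -> Q1) (h_inj : injective h) (F : Q1 -> K) b :
  (forall a, froots h a -> ~~ fconnect h a b -> F a = 0) ->
  \sum_(a <- enum (froots h)) F a = F (froot h b).
Proof.
move=> H.
rewrite (bigD1_seq (froot h b)) ?enum_uniq ?mem_enum ?roots_root //=.
rewrite big1_seq ?addr0 // => a /andP [Hne Ha]; rewrite mem_enum in Ha.
apply: H => //; apply/negP => Hc; move/negP: Hne; apply.
have Hs : connect_sym (frel h) by apply: fconnect_sym.
  by move/(fingraph.rootP Hs): Hc => <-; rewrite (eqP Ha).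
by rewrite unfold_in (root_root (fconnect_sym h_inj)).
Qed.

Variables (f g : Q1 -> Q1) (c : Q1 -> K).
Hypotheses (f_inj : injective f) (g_inj : injective g).
Hypothesis fff : forall a, f (f (f a)) = a.
Hypothesis f1 : forall a, f a != a.
Hypothesis f2 : forall a, f (f a) != a.
Hypothesis cg : forall a, c (g a) = c a.

Lemma order_f a : order f a = 3%N.
Proof.
have Hc : fcycle f [:: a; f a; f (f a)] by rewrite /= !eqxx fff eqxx.
have Hu : uniq [:: a; f a; f (f a)].
  by rewrite /= !inE !negb_or ![a == _]eq_sym f1 f2 (inj_eq f_inj) eq_sym f1.
by rewrite (order_cycle Hc Hu) // mem_head.
Qed.

Lemma c_root a : c (froot g a) = c a.
Proof.
symmetry; apply: (@fconnect_invariant _ g _ c) => [x|]; first by rewrite /invariant /= cg eqxx.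
apply: connect_root.
Qed.

Lemma dW_eq b u r :
  cycderiv t b (W_fg f g c) u r =
  path (t b) [:: f b; f (f b)] u r - c b * path (t b) (traject g (g b) (order g b).-1) u r.
Proof.
rewrite /cycderiv /W_fg big_cat !big_map /=.
have -> : \sum_(a <- enum (froots f)) 1 * cycderiv_seq K t b (traject f a 3) u r =
          path (t b) [:: f b; f (f b)] u r.
  rewrite (@sum_roots f f_inj (fun a => 1 * cycderiv_seq K t b (traject f a 3) u r) b).
    rewrite mul1r -(order_f (froot f b)) cs_orbit // ?order_f //.
    by rewrite fconnect_sym // connect_root.
  by move=> a _ Ha; rewrite -(order_f a) cs_orbit0 // mulr0.
rewrite (@sum_roots g g_inj (fun a => - c a * cycderiv_seq K t b (traject g a (order g a)) u r) b).
  rewrite cs_orbit //; last by rewrite fconnect_sym // connect_root.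
  rewrite c_root mulNr (@order_conn _ g g_inj (froot g b) b) //.
  by rewrite fconnect_sym // connect_root.
by move=> a _ Ha; rewrite cs_orbit0 // mulr0.
Qed.
End DW.


Section Main.
Variables (K : fieldType) (Q0 Q1 : finType) (s t : Q1 -> Q0).
Variables (f g : Q1 -> Q1) (c : Q1 -> K).
Hypothesis noloop : forall a, s a != t a.
Hypothesis no2 : forall a b, s a = t b -> t a = s b -> False.
Hypothesis outdeg : forall v, #|[set a | s a == v]| = 2%N.
Hypothesis f_bij : bijective f.
Hypothesis g_bij : bijective g.
Hypothesis fg_set : forall a, [set f a; g a] = [set b | s b == t a].
Hypothesis fff : forall a, f (f (f a)) = a.
Hypothesis cnz : forall a, c a != 0.
Hypothesis cg : forall a, c (g a) = c a.

Lemma f_inj : injective f. Proof. exact: bij_inj. Qed.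
Lemma g_inj : injective g. Proof. exact: bij_inj. Qed.

Lemma s_f a : s (f a) = t a.
Proof. have : f a \in [set b | s b == t a] by rewrite -fg_set !inE eqxx.
by rewrite inE => /eqP. Qed.
Lemma s_g a : s (g a) = t a.
Proof. have : g a \in [set b | s b == t a] by rewrite -fg_set !inE eqxx orbT.
by rewrite inE => /eqP. Qed.

Lemma fg_neq a : f a != g a.
Proof. have := outdeg (t a); rewrite -fg_set cards2; by case: (f a != g a). Qed.

Lemma F2 x y : x != y -> t x = t y -> f y = g x.
Proof.
move=> Hxy Ht.
have : f y \in [set f x; g x] by rewrite fg_set inE s_f Ht.
rewrite !inE => /orP [/eqP /f_inj E | /eqP //].
by rewrite E eqxx in Hxy.
Qed.

Lemma f1 a : f a != a.
Proof. apply/eqP => E; move: (noloop a); by rewrite -{1}E s_f eqxx. Qed.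

Lemma f2 a : f (f a) != a.
Proof.
apply/eqP => E; move: (f1 a); rewrite -{1}E fff.
have := f_equal f E; rewrite fff => ->. by rewrite eqxx.
Qed.

Local Notation m := (order g).

Lemma m3 a : (3 <= m a)%N.
Proof.
have Ho := iter_order g_inj a.
have Hp := order_gt0 g a.
case E: (m a) => [|[|[|n]]] //; rewrite E in Hp Ho => //.
- move: (noloop a); by rewrite -{1}Ho /= s_g eqxx.
- exfalso; apply: (@no2 a (g a)); last by rewrite s_g.
  by rewrite -s_g; move: Ho => /= ->.
Qed.

Lemma tgt_traj x k : path_tgt t (s x) (traject g x k) = s (iter k g x).
Proof.
elim: k x => [|k IH] x //=.
rewrite /path_tgt /=; have := IH (g x); rewrite /path_tgt s_g => ->.
by rewrite -iterSr.
Qed.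

Lemma tgt_L b : path_tgt t (t b) [:: f b; f (f b)] = s b.
Proof. by rewrite /path_tgt /= -s_f fff. Qed.

Lemma tgt_R b : path_tgt t (t b) (traject g (g b) (m b).-1) = s b.
Proof.
rewrite -s_g tgt_traj -iterSr prednK ?order_gt0 //.
by rewrite iter_order //; apply: g_inj.
Qed.

Definition dW := fun b => cycderiv t b (W_fg f g c).
Variable v0 : Q0.
Local Notation Rel := (Rel s t dW v0).

Lemma dW_eq' b u r : dW b u r = ps_path K (t b) [:: f b; f (f b)] u r
   - c b * ps_path K (t b) (traject g (g b) (m b).-1) u r.
Proof.
apply: dW_eq => //; [exact: f_inj | exact: g_inj | exact: f1 | exact: f2].
Qed.

Lemma mv p q b : path_tgt t v0 p = t b ->
  Rel (p ++ [:: f b; f (f b)] ++ q) (c b) (p ++ traject g (g b) (m b).-1 ++ q).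
Proof.
move=> Hp; apply: (@Rel_move K Q0 Q1 s t dW v0 b _ _ (c b) (s b)) => //.
- exact: dW_eq'.
- exact: tgt_L.
- exact: tgt_R.
Qed.

Lemma mv_inv p q b : path_tgt t v0 p = t b ->
  Rel (p ++ traject g (g b) (m b).-1 ++ q) (c b)^-1 (p ++ [:: f b; f (f b)] ++ q).
Proof.
move=> Hp; apply: (@Rel_move_inv K Q0 Q1 s t dW v0 b _ _ (c b) (s b)) => //.
- exact: dW_eq'.
- exact: tgt_L.
- exact: tgt_R.
Qed.

Definition Zw d := [:: d; f d; g (f d)].

Lemma t_ff x : t (f (f x)) = s x.
Proof. by rewrite -s_f fff. Qed.

Lemma zstep p q d e bt z :
  e = f (f d) -> bt = iter (m e - 2) g e -> z = f (f (g bt)) ->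
  path_tgt t v0 p = s d ->
  Rel (p ++ Zw d ++ q) (c e * c z)
      ((p ++ traject g (g e) (m e - 3)) ++ Zw bt ++ (traject g (g (g (f bt))) (m z - 3) ++ q)).
Proof.
move=> He Hbt0 Hz Hp.
have Hj := m3 e.
have E1 : p ++ Zw d ++ q = p ++ [:: f e; f (f e)] ++ (g (f d) :: q) by rewrite He /Zw !fff.
rewrite E1; apply: Rel_trans; first by apply: mv; rewrite Hp He t_ff.
have Hbt : iter (m e - 3) g (g e) = bt.
  by rewrite -iterSr Hbt0 -subSn.
have Hgbt : g (g bt) = e.
  rewrite Hbt0 -!iterS.
  have -> : ((m e - 2).+2 = m e)%N by rewrite -addn2 (subnK (ltnW Hj)).
  by rewrite iter_order //; apply: g_inj.
have E2 : traject g (g e) (m e).-1 = traject g (g e) (m e - 3) ++ [:: bt; g bt].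
  have -> : (m e).-1 = (m e - 3 + 2)%N by rewrite -{1}(subnK Hj) addnS.
  by rewrite trajectD Hbt.
have Hfd : f d != g bt.
  apply/eqP => H; move: (fg_neq (f d)); rewrite {2}H Hgbt He eqxx //.
have E3 : g (f d) = f (g bt).
  symmetry; apply: F2 => //; rewrite -[t (g bt)]s_g Hgbt He s_f //.
rewrite E2 E3.
have E4 : (p ++ (traject g (g e) (m e - 3) ++ [:: bt; g bt]) ++ f (g bt) :: q) =
   (rcons (p ++ traject g (g e) (m e - 3)) bt) ++ [:: f z; f (f z)] ++ q.
  by rewrite Hz !fff -cats1 -!catA.
rewrite E4 -[c z]mulr1; apply: Rel_trans; first by apply: mv; rewrite tgt_rcons Hz t_ff -s_g.
have Hzb : z != bt.
  apply/eqP => H; move: (fg_neq bt); rewrite -{1}H Hz fff eqxx //.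
have E5 : g z = f bt.
  symmetry; apply: F2 => //; rewrite Hz t_ff s_g //.
have Hk := m3 z.
have E6 : traject g (g z) (m z).-1 = [:: f bt; g (f bt)] ++ traject g (g (g (f bt))) (m z - 3).
  have -> : (m z).-1 = (m z - 3).+2 by rewrite -{1}(subnK Hk) addnS addn2.
  by rewrite E5.
rewrite E6 /Zw -cats1 -!catA /=; apply: Rel_refl.
Qed.

Lemma zstep_tgt p d e bt :
  e = f (f d) -> bt = iter (m e - 2) g e ->
  path_tgt t v0 p = s d -> path_tgt t v0 (p ++ traject g (g e) (m e - 3)) = s bt.
Proof.
move=> He Hbt Hp; have Hj := m3 e.
rewrite tgt_cat Hp -(t_ff d) -He -s_g tgt_traj -iterSr Hbt.
by rewrite -subSn.
Qed.

Lemma zstep_m d e bt z :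
  e = f (f d) -> bt = iter (m e - 2) g e -> z = f (f (g bt)) ->
  m e = m bt /\ m z = m (f bt).
Proof.
move=> He Hbt Hz.
split; first by rewrite Hbt; apply: order_conn; [apply: g_inj | apply: fconnect_iter].
have Hzb : z != bt.
  apply/eqP => H; move: (fg_neq bt); rewrite -{1}H Hz fff eqxx //.
have E5 : g z = f bt.
  symmetry; apply: F2 => //; rewrite Hz t_ff s_g //.
by rewrite -E5 order_h //; apply: g_inj.
Qed.

Lemma Zgrow (Hstar : forall a, (4 <= m a)%N \/ (4 <= m (f a))%N) N :
  forall d p q, path_tgt t v0 p = s d ->
  exists k p' q' d', [/\ path_tgt t v0 p' = s d', (N <= size p' + size q')%N &
     Rel (p ++ Zw d ++ q) k (p' ++ Zw d' ++ q')].
Proof.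
elim: N => [|N IH] d p q Hp.
  by exists 1, p, q, d; split => //; apply: Rel_refl.
have [k [p' [q' [d' [H1 H2 R1]]]]] := IH d p q Hp.
set e := f (f d'); set bt := iter (m e - 2) g e; set z := f (f (g bt)).
have R2 := zstep q' erefl (erefl bt) (erefl z) H1.
have [Em1 Em2] := zstep_m (d := d') (erefl e) (erefl bt) (erefl z).
exists (k * (c e * c z)), (p' ++ traject g (g e) (m e - 3)),
   (traject g (g (g (f bt))) (m z - 3) ++ q'), bt; split.
- by apply: (@zstep_tgt p' d' e bt).
- rewrite !size_cat !size_traject Em1 Em2.
  have := Hstar bt; have := m3 bt; have := m3 (f bt).
  move: (m bt) (m (f bt)) H2 => x y; lia.
- exact: Rel_trans R1 R2.
Qed.

Lemma zero_of_rel X k W n : Rel X k W -> (n <= size W)%N ->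
  exists y, in_gen_ideal s t dW y /\ forall u r, valid_path s t u r -> (size r < n)%N -> ps_path K v0 X u r = y u r.
Proof.
move=> [z [Iz Hz]] Hn; exists z; split => // u r V Hr.
rewrite Hz // /ps_path.
have -> : (r == W) = false.
  apply/negP => /eqP E; move: Hr; rewrite E ltnNge Hn //.
by rewrite andbF mulr0 add0r.
Qed.

Lemma zero_of_loop X k : Rel X k X -> k != 1 ->
  exists y, in_gen_ideal s t dW y /\ forall u r, valid_path s t u r -> ps_path K v0 X u r = y u r.
Proof.
move=> [z [Iz Hz]] Hk; exists (fun u r => (1 - k)^-1 * z u r); split.
  exact: IG_scale.
move=> u r V; have := Hz u r V.
move=> E; apply: (@mulfI _ (1 - k)); first by rewrite subr_eq0 eq_sym.
rewrite mulrA mulfV ?subr_eq0 1?eq_sym // mul1r mulrBl mul1r.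
by apply/eqP; rewrite subr_eq addrC -E.
Qed.

Lemma gfgf x : g (f (f (g (f (f x))))) = x.
Proof.
set x0 := f (f x); set z := f (f (g x0)).
have Hz : z != x0.
  apply/eqP => H; move: (fg_neq x0); rewrite -{1}H /z fff eqxx //.
have : f x0 = g z by apply: F2 => //; rewrite /z t_ff s_g.
by rewrite /x0 fff => <-.
Qed.

Local Notation ZJ X := (zero_in_jacobian s t dW (ps_path K v0 X)).

Lemma zero_trans X k Y : Rel X k Y -> ZJ Y -> ZJ X.
Proof.
move=> [z [Iz Hz]] HY n; have [y [Iy Hy]] := HY n.
exists (fun u r => k * y u r + z u r); split.
  by apply: IG_add => //; apply: IG_scale.
by move=> u r V Hr; rewrite Hz // Hy.
Qed.

Lemma star_ZJ (Hstar : forall a, (4 <= m a)%N \/ (4 <= m (f a))%N) d q :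
  v0 = s d -> ZJ (Zw d ++ q).
Proof.
move=> Hv n.
have [k [p' [q' [d' [_ H2 R1]]]]] := Zgrow Hstar n (p := [::]) q (d := d) Hv.
apply: (zero_of_rel R1).
rewrite !size_cat; lia.
Qed.

Lemma final_ZJ a : v0 = s a -> (forall q, ZJ (Zw a ++ q)) ->
  ZJ [:: a; f a; f (f a); a] /\ ZJ (rcons (traject g a (m a)) a).
Proof.
move=> Hv HZ.
have HX : ZJ [:: a; f a; f (f a); a].
  have E : [:: a; f a; f (f a); a] = [:: a; f a] ++ [:: f (f a); f (f (f a))] ++ [::]
    by rewrite fff.
  rewrite E; apply: zero_trans; first by apply: mv.
  have Hk := m3 (f a).
  have -> : ([:: a; f a] ++ traject g (g (f a)) (m (f a)).-1 ++ [::]) =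
            Zw a ++ traject g (g (g (f a))) (m (f a) - 2).
    have -> : (m (f a)).-1 = (m (f a) - 2).+1 by lia.
    by rewrite cats0.
  exact: HZ.
split => //.
have Ha := m3 a.
have E : rcons (traject g a (m a)) a = [:: a] ++ traject g (g a) (m a).-1 ++ [:: a].
  by rewrite -{1}(prednK (order_gt0 g a)) /= cats1.
rewrite E; apply: zero_trans; first by apply: mv_inv; rewrite /path_tgt.
exact: HX.
Qed.

Section Diamond.
Hypothesis Hd3 : forall a, m a = 3%N.

Lemma ggg x : g (g (g x)) = x.
Proof. by have := iter_order g_inj x; rewrite Hd3. Qed.

Lemma r3 x : g (f (f x)) = f (g (g x)).
Proof. by have := gfgf (f (g (g x))); rewrite fff ggg. Qed.

Lemma r4 x : g (g (f x)) = f (f (g x)).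
Proof. by apply: f_inj; rewrite fff -r3 fff. Qed.

Lemma r5 x : g (f (g x)) = f (g (f x)).
Proof. by rewrite -{1}(fff (f (g x))) r3 r3 ggg. Qed.

Ltac nrm := repeat progress (rewrite ?fff ?ggg ?r3 ?r4 ?r5).

Lemma nx_g x : g x != x.
Proof. apply/eqP => E; move: (noloop x); by rewrite -{1}E s_g eqxx. Qed.
Lemma nx_gg x : g (g x) != x.
Proof.
apply/eqP => E; have E1 : g x = x by have := congr1 g E; rewrite ggg => <-.
by move: (nx_g x); rewrite E1 eqxx.
Qed.
Lemma nx_fgg x : f (g (g x)) != x.
Proof.
apply/eqP => E.
have E1 : f (g (g x)) = g (g (g x)) by rewrite E ggg.
by move: (fg_neq (g (g x))); rewrite E1 eqxx.
Qed.
Lemma nx_fg x : f (g x) != x.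
Proof.
apply/eqP => E; have := congr1 (fun y => g (g y)) E; rewrite /=; nrm => E'.
by move: (f2 (g (g x))); nrm; rewrite E' eqxx.
Qed.
Lemma nx_gf x : g (f x) != x.
Proof.
apply/eqP => E; have := congr1 (fun y => g y) E; rewrite /=; nrm => E'.
by move: (f2 (g x)); nrm; rewrite E' eqxx.
Qed.
Lemma nx_ffg x : f (f (g x)) != x.
Proof.
apply/eqP => E; have := congr1 (fun y => f y) E; rewrite /=; nrm => E'.
by move: (nx_fgg (f x)); nrm; rewrite E' eqxx.
Qed.
Lemma nx_fgf x : f (g (f x)) != x.
Proof.
apply/eqP => E; have := congr1 (fun y => f (f y)) E; rewrite /=; nrm => E'.
by move: (nx_fgg (f (f x))); nrm; rewrite E' eqxx.
Qed.
Lemma nx_ffgf x : f (f (g (f x))) != x.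
Proof.
apply/eqP => E; have := congr1 (fun y => g (g y)) E; rewrite /=; nrm => E'.
by move: (f1 (g (g x))); nrm; rewrite E' eqxx.
Qed.
Lemma nx_ffgg x : f (f (g (g x))) != x.
Proof.
apply/eqP => E; have := congr1 (fun y => g y) E; rewrite /=; nrm => E'.
by move: (f1 (g x)); nrm; rewrite E' eqxx.
Qed.

Lemma Sdec r x : fconnect g r x -> [\/ x = r, x = g r | x = g (g r)].
Proof.
move=> H; rewrite -(iter_findex H).
have := findex_max H; rewrite Hd3.
by case: (findex g r x) => [|[|[|]]] //= _; [apply: Or31 | apply: Or32 | apply: Or33].
Qed.

Lemma fc0 r : fconnect g r r. Proof. exact: connect0. Qed.
Lemma fc1 r : fconnect g r (g r). Proof. exact: fconnect1. Qed.
Lemma fc2 r : fconnect g r (g (g r)). Proof. exact: (fconnect_iter g 2 r). Qed.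

Section Reps.
Variable d : Q1.
Hypothesis Hconn : quiver_connected s t.
Definition S x := [|| fconnect g d x, fconnect g (f (f d)) x,
                      fconnect g (f (f (g d))) x | fconnect g (f (g (f d))) x].

Lemma Sg x : S x -> S (g x).
Proof.
by case/or4P => H; apply/or4P; [apply: Or41 | apply: Or42 | apply: Or43 | apply: Or44];
  apply: connect_trans H (fconnect1 _ _).
Qed.

Lemma Sf x : S x -> S (f x).
Proof.
case/or4P => /Sdec [] ->; apply/or4P.
- have -> : f d = g (f (f (g d))) by nrm. by apply: Or43; apply: fc1.
- have -> : f (g d) = g (g (f (g (f d)))) by nrm. by apply: Or44; apply: fc2.
- have -> : f (g (g d)) = g (f (f d)) by nrm. by apply: Or42; apply: fc1.
- have -> : f (f (f d)) = d by nrm. by apply: Or41; apply: fc0.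
- have -> : f (g (f (f d))) = g (f (g (f d))) by nrm. by apply: Or44; apply: fc1.
- have -> : f (g (g (f (f d)))) = g (g (f (f (g d)))) by nrm. by apply: Or43; apply: fc2.
- have -> : f (f (f (g d))) = g d by nrm. by apply: Or41; apply: fc1.
- have -> : f (g (f (f (g d)))) = f (f d) by nrm. by apply: Or42; apply: fc0.
- have -> : f (g (g (f (f (g d))))) = f (g (f d)) by nrm. by apply: Or44; apply: fc0.
- have -> : f (f (g (f d))) = g (g (f (f d))) by nrm. by apply: Or42; apply: fc2.
- have -> : f (g (f (g (f d)))) = g (g d) by nrm. by apply: Or41; apply: fc2.
- have -> : f (g (g (f (g (f d))))) = f (f (g d)) by nrm. by apply: Or43; apply: fc0.
Qed.

Lemma out_S y : S y -> forall x, s x = t y -> S x.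
Proof.
move=> Hy x Hx.
have : x \in [set f y; g y] by rewrite fg_set inE Hx.
by rewrite !inE => /orP [] /eqP ->; [apply: Sf | apply: Sg].
Qed.

Lemma S_all x : S x.
Proof.
pose P u := forall x, s x = u -> S x.
have P0 : P (s d).
  move=> x0 Hx0; apply: (@out_S (f (f d))); last by rewrite t_ff Hx0.
  by apply/or4P; apply: Or42; apply: fc0.
have step : forall u w, quiver_adj s t u w -> P u -> P w.
  move=> u w /existsP [a /orP [] /andP [/eqP Hs /eqP Ht]] Pu x0 Hx0.
    by apply: (@out_S a); [apply: Pu | rewrite Ht Hx0].
  apply: (@out_S (f (f a))); last by rewrite t_ff Hx0 Hs.
  by apply: Sf; apply: Pu; rewrite s_f.
have := Hconn (s d) (s x); case/connectP => p.
elim: p (s d) P0 => [|w p IH] u Pu /=; first by move=> _ E; apply: Pu; rewrite E.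
by case/andP => Huw Hp E; apply: (IH w) => //; apply: step Huw Pu.
Qed.
Ltac dcase winv nx d := let H := fresh in let H' := fresh in move=> H; have := congr1 winv H; rewrite /=; nrm => H'; by move: (nx d); rewrite -H' eqxx.

Lemma dist_CD : ~~ fconnect g (d) (f (f (g d))).
Proof.
apply/negP => /Sdec [].
- dcase (fun y => f (f (g y))) nx_ffg d.
- dcase (fun y => f (f (g y))) nx_ffgg d.
- dcase (fun y => f (f (g y))) f2 d.
Qed.

Lemma dist_AC : ~~ fconnect g (f (f d)) (d).
Proof.
apply/negP => /Sdec [].
- dcase (fun y : Q1 => y) f2 d.
- dcase (fun y : Q1 => y) nx_fgg d.
- dcase (fun y : Q1 => y) nx_ffgf d.
Qed.

Lemma dist_AD : ~~ fconnect g (f (f d)) (f (f (g d))).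
Proof.
apply/negP => /Sdec [].
- dcase (fun y => f (f (g y))) nx_gg d.
- dcase (fun y => f (f (g y))) nx_fgf d.
- dcase (fun y => f (f (g y))) f1 d.
Qed.

Lemma dist_AB : ~~ fconnect g (f (f d)) (f (g (f d))).
Proof.
apply/negP => /Sdec [].
- dcase (fun y => f (g (f y))) nx_fg d.
- dcase (fun y => f (g (f y))) nx_ffg d.
- dcase (fun y => f (g (f y))) nx_g d.
Qed.

Lemma dist_BC : ~~ fconnect g (f (g (f d))) (d).
Proof.
apply/negP => /Sdec [].
- dcase (fun y : Q1 => y) nx_fgf d.
- dcase (fun y : Q1 => y) nx_ffgg d.
- dcase (fun y : Q1 => y) nx_fg d.
Qed.

Lemma dist_BD : ~~ fconnect g (f (g (f d))) (f (f (g d))).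
Proof.
apply/negP => /Sdec [].
- dcase (fun y => f (f (g y))) nx_fgg d.
- dcase (fun y => f (f (g y))) nx_g d.
- dcase (fun y => f (f (g y))) nx_gf d.
Qed.

Lemma prod4 : \prod_(a | froots g a) c a =
  c d * c (f (f d)) * c (f (f (g d))) * c (f (g (f d))).
Proof.
have Hs : connect_sym (frel g) := fconnect_sym g_inj.
have neq : forall x y, ~~ fconnect g x y -> froot g x != froot g y.
  by move=> x y H; rewrite (root_connect Hs).
set L := [:: froot g d; froot g (f (f d)); froot g (f (f (g d))); froot g (f (g (f d)))].
have UL : uniq L.
  rewrite /L /= !inE !negb_or andbT.
  rewrite [froot g d == _]eq_sym neq ?dist_AC // neq ?dist_CD //.
  rewrite [froot g d == froot g (f (g (f d)))]eq_sym neq ?dist_BC //.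
  rewrite neq ?dist_AD // neq ?dist_AB //.
  by rewrite eq_sym neq ?dist_BD.
have ML : forall a, (a \in L) = froots g a.
  move=> a; apply/idP/idP.
    by rewrite /L !inE => /or4P [] /eqP ->; rewrite /roots (root_root Hs).
  move=> Ha; have := S_all a; rewrite /S.
  have E : forall r, fconnect g r a -> froot g r = a.
    by move=> r /(fingraph.rootP Hs) ->; apply/eqP.
  by rewrite /L !inE => /or4P [] /E ->; rewrite eqxx ?orbT.
rewrite (eq_bigl (fun a => a \in L)); last by move=> a; rewrite ML.
rewrite -big_uniq // /L !big_cons big_nil !(c_root cg) /= mulr1 !mulrA //.
Qed.

End Reps.

Lemma dloop p q d : path_tgt t v0 p = s d ->
  Rel (p ++ Zw d ++ q)
   (c (f (f d)) * c (f (f (g (g (f (f d)))))) * (c (f (f (g (f (f d))))) * c (f (f (g d)))))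
   (p ++ Zw d ++ q).
Proof.
move=> Hp.
have Hb1 : g (f (f d)) = iter (m (f (f d)) - 2) g (f (f d)) by rewrite Hd3.
have R1 : Rel (p ++ Zw d ++ q) (c (f (f d)) * c (f (f (g (g (f (f d)))))))
              (p ++ Zw (g (f (f d))) ++ q).
  move: (@zstep p q d _ _ _ erefl Hb1 erefl Hp).
  by rewrite !Hd3 subnn /= cats0.
have T1 : path_tgt t v0 p = s (g (f (f d))).
  by move: (@zstep_tgt p d _ _ erefl Hb1 Hp); rewrite Hd3 subnn /= cats0.
set b1 := g (f (f d)).
have Hb2 : g (f (f b1)) = iter (m (f (f b1)) - 2) g (f (f b1)) by rewrite Hd3.
have R2 : Rel (p ++ Zw b1 ++ q) (c (f (f b1)) * c (f (f (g (g (f (f b1)))))))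
              (p ++ Zw (g (f (f b1))) ++ q).
  move: (@zstep p q b1 _ _ _ erefl Hb2 erefl T1).
  by rewrite !Hd3 subnn /= cats0.
have E : g (f (f b1)) = d by rewrite /b1 gfgf.
rewrite E in R2.
exact: Rel_trans R1 R2.
Qed.

Lemma rearr (a1 b c1 d1 : K) : a1 * b * (c1 * d1) = c1 * a1 * d1 * b.
Proof. by rewrite !mulrA [RHS]mulrAC [c1 * a1]mulrC [a1 * c1 * b]mulrAC. Qed.

Lemma dia_ZJ (Hconn : quiver_connected s t) d q : v0 = s d ->
  \prod_(a | froots g a) c a != 1 -> ZJ (Zw d ++ q).
Proof.
move=> Hv Hne.
have R := @dloop [::] q d Hv.
rewrite (prod4 d Hconn) in Hne.
have E : c (f (f d)) * c (f (f (g (g (f (f d)))))) * (c (f (f (g (f (f d))))) * c (f (f (g d))))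
   = c d * c (f (f d)) * c (f (f (g d))) * c (f (g (f d))).
  have -> : f (f (g (g (f (f d))))) = f (g (f d)) by nrm.
  have -> : f (f (g (f (f d)))) = g (g d) by nrm.
  by rewrite !cg rearr.
rewrite E in R.
have [y [Iy Hy]] := zero_of_loop R Hne.
by move=> n; exists y; split => // u r V _; apply: Hy.
Qed.
End Diamond.
End Main.

Unset Implicit Arguments.
Set Strict Implicit.

Theorem lemma4p1 (K : fieldType) (Q0 Q1 : finType) (s t : Q1 -> Q0)
    (f g : Q1 -> Q1) (c : Q1 -> K) :
  quiver_connected s t ->
  (forall a, s a != t a) ->                              (* no loops *)
  (forall a b, s a = t b -> t a = s b -> False) ->       (* no 2-cycles *)
  (forall v, #|[set a | s a == v]| = 2%N) ->
  (forall v, #|[set a | t a == v]| = 2%N) ->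
  bijective f -> bijective g ->
  (forall a, [set f a; g a] = [set b | s b == t a]) ->
  (forall a, f (f (f a)) = a) ->
  (forall a, c a != 0) ->
  (forall a, c (g a) = c a) ->
  ((forall a, (4 <= fingraph.order g a)%N \/ (4 <= fingraph.order g (f a))%N) \/
   ((forall a, fingraph.order g a = 3%N) /\ \prod_(a | froots g a) c a != 1)) ->
  forall a : Q1,
    zero_in_jacobian s t (fun b => cycderiv t b (W_fg f g c))
      (ps_path K (s a) [:: a; f a; f (f a); a]) /\
    zero_in_jacobian s t (fun b => cycderiv t b (W_fg f g c))
      (ps_path K (s a) (rcons (traject g a (fingraph.order g a)) a)).
Proof.
move=> Hconn noloop no2 outdeg indeg fbij gbij fgset fff cnz cg Hcase a.
have key : forall q, zero_in_jacobian s t (fun b => cycderiv t b (W_fg f g c))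
                 (ps_path K (s a) (Zw f g a ++ q)).
  case: Hcase => [Hstar | [Hd3 Hne]] q.
  - exact: (star_ZJ noloop no2 outdeg fbij gbij fgset fff cg Hstar q erefl).
  - exact: (dia_ZJ noloop no2 outdeg fbij gbij fgset fff cg Hd3 Hconn q erefl Hne).
exact: (final_ZJ noloop no2 fbij gbij fgset fff cnz cg erefl key).
Qed.
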